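(* Let $\theta\in[0,2\pi)$ and $\alpha_2,\alpha_3\in\mathbb C$. Put $\gamma_\to=e^{i(\theta+\sqrt2\Lambda+3\pi/4)}$, $\gamma_\leftarrow=e^{i(-\theta+\sqrt2\Lambda+3\pi/4)}$, $$D_\gamma=\{\psi_0+c_L(L_++\gamma_\to R_-)+c_R(R_++\gamma_\leftarrow L_-):\psi_0\in D(H_0),\ c_L,c_R\in\mathbb C\},$$ $$D_\alpha=\{\psi\in D(H_0^* ):\psi(\Lambda)=\alpha_2\psi'(-\Lambda)\ \text{and}\ \psi'(\Lambda)=\alpha_3\psi(-\Lambda)\}.$$ Then $D_\gamma=D_\alpha$ if and only if $\alpha_2=-e^{i\theta}$ and $\alpha_3=e^{i\theta}$.
   Context: Fix $\Lambda>0$, $\Omega_\Lambda=(-\infty,-\Lambda)\cup(\Lambda,\infty)$. $D(H_0^* )$ is the set of $\psi\in L^2(\Omega_\Lambda)$ such that $\psi,\psi'$ are locally absolutely continuous on each closed half-line $(-\infty,-\Lambda]$, $[\Lambda,\infty)$ and $\psi''$ is square integrable; $\psi(\pm\Lambda),\psi'(\pm\Lambda)$ are one-sided boundary values. $D(H_0)=\{\psi\in D(H_0^* ):\psi(\pm\Lambda)=\psi'(\pm\Lambda)=0\}$ (the domain of the closure of $-\frac{d^2}{dx^2}$ on $C_0^\infty(\Omega_\Lambda)$). Let $N=2^{1/4}e^{\Lambda/\sqrt2}$ and define on $\Omega_\Lambda$: $R_\pm(x)=0$ for $x<-\Lambda$, $R_\pm(x)=Ne^{(-1\pm i)x/\sqrt2}$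 for $x>\Lambda$; $L_\pm(x)=Ne^{(1\mp i)x/\sqrt2}$ for $x<-\Lambda$, $L_\pm(x)=0$ for $x>\Lambda$. *)

(* Defs.v *)
From Stdlib Require Import Reals Lra List.
Open Scope R_scope.

Record Cplx := mkC { Re : R ; Im : R }.
Definition C0 : Cplx := mkC 0 0.
Definition RtoC (r : R) : Cplx := mkC r 0.
Definition Cadd (z w : Cplx) : Cplx := mkC (Re z + Re w) (Im z + Im w).
Definition Copp (z : Cplx) : Cplx := mkC (- Re z) (- Im z).
Definition Csub (z w : Cplx) : Cplx := Cadd z (Copp w).
Definition Cmul (z w : Cplx) : Cplx :=
  mkC (Re z * Re w - Im z * Im w) (Re z * Im w + Im z * Re w).
Definition Cnorm2 (z : Cplx) : R := Re z * Re z + Im z * Im z.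
Definition Cmod (z : Cplx) : R := sqrt (Cnorm2 z).
Definition Cexpi (t : R) : Cplx := mkC (cos t) (sin t).

Definition right_hl (Lam : R) (x : R) : Prop := Lam <= x.
Definition left_hl (Lam : R) (x : R) : Prop := x <= - Lam.

(* derivative within a set S (one-sided at the endpoint of a closed half-line) *)
Definition has_deriv_within (S : R -> Prop) (f df : R -> Cplx) : Prop :=
  forall x, S x -> forall eps, 0 < eps -> exists delta, 0 < delta /\
    forall y, S y -> Rabs (y - x) < delta ->
      Cmod (Csub (Csub (f y) (f x)) (Cmul (df x) (RtoC (y - x)))) <= eps * Rabs (y - x).

Fixpoint ordered_intervals (c : R) (l : list (R * R)) : Prop :=
  match l with
  | nil => True
  | (a, b) :: l' => c <= a /\ a < b /\ ordered_intervals b l'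
  end.

Definition total_length (l : list (R * R)) : R :=
  fold_right (fun p s => (snd p - fst p) + s) 0 l.

Definition variation (f : R -> Cplx) (l : list (R * R)) : R :=
  fold_right (fun p s => Cmod (Csub (f (snd p)) (f (fst p))) + s) 0 l.

Definition loc_abs_cont (S : R -> Prop) (f : R -> Cplx) : Prop :=
  forall lo hi, S lo -> S hi -> lo <= hi ->
    forall eps, 0 < eps -> exists delta, 0 < delta /\
      forall l, ordered_intervals lo l ->
        Forall (fun p => snd p <= hi) l ->
        total_length l < delta -> variation f l < eps.

(* psi is square integrable on S (psi continuous there, so the Lebesgue integral of
   |psi|^2 over S equals the supremum of Riemann integrals over compact subintervals) *)
Definition square_integrable_on (S : R -> Prop) (f : R -> Cplx) : Prop :=
  exists M, forall a b, S a -> S b -> a <= b ->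
    exists pr : Riemann_integrable (fun x => Cnorm2 (f x)) a b, RiemannInt pr <= M.

(* Riesz's quadratic variation: sup over finite families of non-overlapping
   intervals in S of  sum |g(b_k)-g(a_k)|^2/(b_k-a_k).  For an (absolutely)
   continuous g this is finite iff g' exists a.e. and is in L^2(S), and then it
   equals ||g'||^2_{L^2(S)}  (Riesz 1910). *)
Definition riesz2_sum (g : R -> Cplx) (l : list (R * R)) : R :=
  fold_right (fun p s => Cnorm2 (Csub (g (snd p)) (g (fst p))) / (snd p - fst p) + s) 0 l.

Definition deriv_square_integrable_on (S : R -> Prop) (g : R -> Cplx) : Prop :=
  exists M, forall c l, ordered_intervals c l ->
    Forall (fun p => S (fst p) /\ S (snd p)) l -> riesz2_sum g l <= M.

Definition Hstar_on (S : R -> Prop) (psi dpsi : R -> Cplx) : Prop :=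
  has_deriv_within S psi dpsi /\
  loc_abs_cont S psi /\ loc_abs_cont S dpsi /\
  square_integrable_on S psi /\ deriv_square_integrable_on S dpsi.

(* psi in D(H_0^star), with derivative dpsi; psi is represented by its (unique)
   continuous representative on the two closed half-lines; the values of
   psi, dpsi on (-Lam, Lam) are irrelevant *)
Definition Hstar_with (Lam : R) (psi dpsi : R -> Cplx) : Prop :=
  Hstar_on (left_hl Lam) psi dpsi /\ Hstar_on (right_hl Lam) psi dpsi.

Definition in_DH0star (Lam : R) (psi : R -> Cplx) : Prop :=
  exists dpsi, Hstar_with Lam psi dpsi.

Definition in_DH0 (Lam : R) (psi : R -> Cplx) : Prop :=
  exists dpsi, Hstar_with Lam psi dpsi /\
    psi Lam = C0 /\ psi (- Lam) = C0 /\ dpsi Lam = C0 /\ dpsi (- Lam) = C0.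

Definition Nc (Lam : R) : R := Rpower 2 (1/4) * exp (Lam / sqrt 2).

Definition Rplus (Lam : R) (x : R) : Cplx :=
  if Rlt_dec 0 x then Cmul (RtoC (Nc Lam * exp (- x / sqrt 2))) (Cexpi (x / sqrt 2)) else C0.
Definition Rminus (Lam : R) (x : R) : Cplx :=
  if Rlt_dec 0 x then Cmul (RtoC (Nc Lam * exp (- x / sqrt 2))) (Cexpi (- x / sqrt 2)) else C0.
Definition Lplus (Lam : R) (x : R) : Cplx :=
  if Rlt_dec x 0 then Cmul (RtoC (Nc Lam * exp (x / sqrt 2))) (Cexpi (- x / sqrt 2)) else C0.
Definition Lminus (Lam : R) (x : R) : Cplx :=
  if Rlt_dec x 0 then Cmul (RtoC (Nc Lam * exp (x / sqrt 2))) (Cexpi (x / sqrt 2)) else C0.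

Definition gamma_to (Lam theta : R) : Cplx := Cexpi (theta + sqrt 2 * Lam + 3 * PI / 4).
Definition gamma_from (Lam theta : R) : Cplx := Cexpi (- theta + sqrt 2 * Lam + 3 * PI / 4).

(* membership in D_gamma (equality on the closed half-lines, i.e. on Omega_Lam
   together with the one-sided boundary values) *)
Definition in_Dgamma (Lam theta : R) (psi : R -> Cplx) : Prop :=
  exists psi0 cL cR, in_DH0 Lam psi0 /\
    forall x, Lam <= Rabs x ->
      psi x = Cadd (psi0 x)
               (Cadd (Cmul cL (Cadd (Lplus Lam x) (Cmul (gamma_to Lam theta) (Rminus Lam x))))
                     (Cmul cR (Cadd (Rplus Lam x) (Cmul (gamma_from Lam theta) (Lminus Lam x))))).

Definition in_Dalpha (Lam : R) (a2 a3 : Cplx) (psi : R -> Cplx) : Prop :=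
  exists dpsi, Hstar_with Lam psi dpsi /\
    psi Lam = Cmul a2 (dpsi (- Lam)) /\ dpsi Lam = Cmul a3 (psi (- Lam)).

(* Main.v *)
Require Import Defs.
From Stdlib Require Import Reals.
From Stdlib Require Import Lra Psatz Ring.
From Coquelicot Require Import Rcomplements Rbar Hierarchy Continuity Derive RInt RInt_analysis AutoDerive.
From Stdlib Require Import List.
Open Scope R_scope.

Lemma Cext (z w : Cplx) : Re z = Re w -> Im z = Im w -> z = w.
Proof. destruct z, w; simpl; intros; subst; reflexivity. Qed.

Lemma Cnorm2_ge0 z : 0 <= Cnorm2 z.
Proof. unfold Cnorm2; nra. Qed.

Lemma Cmod_ge0 z : 0 <= Cmod z.
Proof. apply sqrt_pos. Qed.

Lemma Cmod_sq z : Cmod z * Cmod z = Cnorm2 z.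
Proof. apply sqrt_sqrt, Cnorm2_ge0. Qed.

Lemma sqrt_le_sq x y : 0 <= y -> x <= y * y -> sqrt x <= y.
Proof. intros Hy H. rewrite <- (sqrt_square y Hy). apply sqrt_le_1_alt; exact H. Qed.

Lemma Cmod_le_abs z : Cmod z <= Rabs (Re z) + Rabs (Im z).
Proof.
  unfold Cmod, Cnorm2. apply sqrt_le_sq.
  - pose proof (Rabs_pos (Re z)); pose proof (Rabs_pos (Im z)); lra.
  - pose proof (Rabs_pos (Re z)); pose proof (Rabs_pos (Im z)).
    assert (E1: Rabs (Re z) * Rabs (Re z) = Re z * Re z) by (rewrite <- Rabs_mult; apply Rabs_right; nra).
    assert (E2: Rabs (Im z) * Rabs (Im z) = Im z * Im z) by (rewrite <- Rabs_mult; apply Rabs_right; nra).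
    nra.
Qed.

Lemma Re_le_Cmod z : Rabs (Re z) <= Cmod z.
Proof.
  unfold Cmod, Cnorm2. rewrite <- sqrt_Rsqr_abs. apply sqrt_le_1_alt. unfold Rsqr; nra.
Qed.

Lemma Im_le_Cmod z : Rabs (Im z) <= Cmod z.
Proof.
  unfold Cmod, Cnorm2. rewrite <- sqrt_Rsqr_abs. apply sqrt_le_1_alt. unfold Rsqr; nra.
Qed.

Lemma Cmod_triangle z w : Cmod (Cadd z w) <= Cmod z + Cmod w.
Proof.
  unfold Cmod at 1. apply sqrt_le_sq.
  - pose proof (Cmod_ge0 z); pose proof (Cmod_ge0 w); lra.
  - pose proof (Cmod_sq z); pose proof (Cmod_sq w).
    pose proof (Cmod_ge0 z); pose proof (Cmod_ge0 w).
    unfold Cnorm2 in *. destruct z as [a b], w as [c d]; simpl in *.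
    set (m := Cmod (mkC a b)) in *. set (n := Cmod (mkC c d)) in *.
    assert (Hmn: (a*c+b*d)*(a*c+b*d) <= (m*n)*(m*n)).
    { replace ((m*n)*(m*n)) with ((m*m)*(n*n)) by ring. rewrite H, H0. assert (Hx: (a*a+b*b)*(c*c+d*d) = (a*c+b*d)*(a*c+b*d) + (a*d-b*c)*(a*d-b*c)) by ring. rewrite Hx. pose proof (Rle_0_sqr (a*d-b*c)); unfold Rsqr in *; lra. }
    assert (0 <= m*n) by (apply Rmult_le_pos; auto).
    assert (a*c+b*d <= m*n) by nra.
    nra.
Qed.

Lemma Cnorm2_mul z w : Cnorm2 (Cmul z w) = Cnorm2 z * Cnorm2 w.
Proof. destruct z, w; unfold Cnorm2; simpl; ring. Qed.

Lemma Cmod_mul z w : Cmod (Cmul z w) = Cmod z * Cmod w.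
Proof. unfold Cmod. rewrite Cnorm2_mul. apply sqrt_mult; apply Cnorm2_ge0. Qed.

Lemma Cmod_RtoC r : Cmod (RtoC r) = Rabs r.
Proof. unfold Cmod, Cnorm2; simpl. rewrite <- sqrt_Rsqr_abs. f_equal. unfold Rsqr; ring. Qed.

Lemma Cnorm2_add_le z w : Cnorm2 (Cadd z w) <= 2 * (Cnorm2 z + Cnorm2 w).
Proof. destruct z as [a b], w as [c d]; unfold Cnorm2; simpl.
  pose proof (Rle_0_sqr (a-c)); pose proof (Rle_0_sqr (b-d)); unfold Rsqr in *; nra. Qed.

Lemma Cnorm2_eq0 z : Cnorm2 z = 0 -> z = C0.
Proof. destruct z as [a b]; unfold Cnorm2; simpl; intro H. apply Cext; simpl; nra. Qed.

Lemma Cmod_eq0 z : Cmod z = 0 -> z = C0.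
Proof. intro H. apply Cnorm2_eq0. rewrite <- Cmod_sq, H; ring. Qed.

Lemma Cmul_cancel u w : Cmul u w = C0 -> w <> C0 -> u = C0.
Proof.
  intros H Hw. apply Cnorm2_eq0.
  assert (Cnorm2 (Cmul u w) = 0) by (rewrite H; unfold Cnorm2; simpl; ring).
  rewrite Cnorm2_mul in H0. destruct (Rmult_integral _ _ H0); auto.
  exfalso; apply Hw, Cnorm2_eq0; auto.
Qed.

Definition convex (S : R -> Prop) := forall a b x, S a -> S b -> a <= x <= b -> S x.

Lemma left_convex Lam : convex (left_hl Lam).
Proof. unfold convex, left_hl; intros; lra. Qed.
Lemma right_convex Lam : convex (right_hl Lam).
Proof. unfold convex, right_hl; intros; lra. Qed.

Lemma ord_facts c l : ordered_intervals c l -> Forall (fun p => c <= fst p /\ fst p < snd p) l.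
Proof.
  revert c; induction l as [|[a b] l IH]; intros c H; simpl in *.
  - constructor.
  - destruct H as [H1 [H2 H3]]. constructor; simpl; [lra|].
    eapply Forall_impl; [|apply IH; eauto]. intros [x y]; simpl; lra.
Qed.

Lemma Forall_and2 {A} (P Q : A -> Prop) l : Forall P l -> Forall Q l -> Forall (fun p => P p /\ Q p) l.
Proof. induction 1; intros HQ; inversion HQ; subst; constructor; auto. Qed.

Lemma ord_in S lo hi l : convex S -> S lo -> S hi -> ordered_intervals lo l ->
  Forall (fun p => snd p <= hi) l -> Forall (fun p => S (fst p) /\ S (snd p) /\ fst p < snd p) l.
Proof.
  intros HS Hlo Hhi Ho Hf. pose proof (Forall_and2 _ _ _ (ord_facts _ _ Ho) Hf) as H.
  eapply Forall_impl; [|exact H]. intros [a b] HH; simpl in *; destruct HH as [[H1 H2] H3].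
  refine (conj _ (conj _ H2)); apply (HS lo hi); auto; lra.
Qed.

Lemma ord_in2 S c l : convex S -> ordered_intervals c l ->
  Forall (fun p => S (fst p) /\ S (snd p)) l -> Forall (fun p => S (fst p) /\ S (snd p) /\ fst p < snd p) l.
Proof.
  intros HS Ho Hf. pose proof (Forall_and2 _ _ _ (ord_facts _ _ Ho) Hf) as H.
  eapply Forall_impl; [|exact H]. intros [a b] HH; simpl in *; tauto.
Qed.

Lemma Hstar_on_ext S f df g dg : convex S -> Hstar_on S f df ->
  (forall x, S x -> f x = g x) -> (forall x, S x -> df x = dg x) -> Hstar_on S g dg.
Proof.
  intros HS [H1 [H2 [H3 [H4 H5]]]] Ef Ed.
  assert (Var: forall h k, (forall x, S x -> h x = k x) -> forall l,
     Forall (fun p => S (fst p) /\ S (snd p) /\ fst p < snd p) l -> variation h l = variation k l).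
  { intros h k E l Hl; induction l as [|[a b] l IH]; simpl; auto.
    inversion Hl; subst. simpl in H6. rewrite IH by auto. rewrite !E by tauto. reflexivity. }
  repeat split.
  - intros x Hx eps He. destruct (H1 x Hx eps He) as [d [Hd Hd']]. exists d; split; auto.
    intros y Hy Hyx. rewrite <- !Ef, <- Ed by auto. auto.
  - intros lo hi Hlo Hhi Hlh eps He. destruct (H2 lo hi Hlo Hhi Hlh eps He) as [d [Hd Hd']].
    exists d; split; auto. intros l Ho Hf Ht. rewrite <- (Var f g Ef l); auto.
    apply (ord_in S lo hi l HS Hlo Hhi Ho Hf).
  - intros lo hi Hlo Hhi Hlh eps He. destruct (H3 lo hi Hlo Hhi Hlh eps He) as [d [Hd Hd']].
    exists d; split; auto. intros l Ho Hf Ht. rewrite <- (Var df dg Ed l); auto.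
    apply (ord_in S lo hi l HS Hlo Hhi Ho Hf).
  - destruct H4 as [M HM]. exists M. intros a b Ha Hb Hab. destruct (HM a b Ha Hb Hab) as [pr Hpr].
    assert (E: forall x, Rmin a b < x < Rmax a b -> Cnorm2 (f x) = Cnorm2 (g x)).
    { intros x Hx. rewrite Rmin_left, Rmax_right in Hx by lra. rewrite Ef; auto. apply (HS a b); auto; lra. }
    pose proof (ex_RInt_ext _ _ _ _ E (ex_RInt_Reals_1 _ _ _ pr)) as Hg.
    exists (ex_RInt_Reals_0 _ _ _ Hg). rewrite <- (RInt_Reals _ _ _ (ex_RInt_Reals_0 _ _ _ Hg)), <- (RInt_ext _ _ _ _ E), (RInt_Reals _ _ _ pr). exact Hpr.
  - destruct H5 as [M HM]. exists M. intros c l Ho Hf.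
    assert (riesz2_sum dg l = riesz2_sum df l).
    { pose proof (ord_in2 _ _ _ HS Ho Hf) as Hl. clear -Hl Ed.
      induction l as [|[a b] l IH]; simpl; auto. inversion Hl; subst. simpl in H1.
      rewrite IH by auto. rewrite !Ed by tauto. reflexivity. }
    rewrite H. apply (HM c l Ho Hf).
Qed.

Definition cont_within (S : R -> Prop) (f : R -> Cplx) := forall x, S x -> forall eps, 0 < eps ->
  exists d, 0 < d /\ forall y, S y -> Rabs (y - x) < d -> Cmod (Csub (f y) (f x)) < eps.

Lemma deriv_cont S f df : has_deriv_within S f df -> cont_within S f.
Proof.
  intros H x Hx eps He. destruct (H x Hx 1 Rlt_0_1) as [d [Hd Hd']].
  set (K := Cmod (df x) + 1). assert (HK: 0 < K) by (unfold K; pose proof (Cmod_ge0 (df x)); lra).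
  exists (Rmin d (eps / K)). split. { apply Rmin_pos; auto. apply Rdiv_lt_0_compat; auto. }
  intros y Hy Hyx. pose proof (Rmin_l d (eps/K)); pose proof (Rmin_r d (eps/K)).
  specialize (Hd' y Hy ltac:(lra)).
  assert (E: Csub (f y) (f x) = Cadd (Csub (Csub (f y) (f x)) (Cmul (df x) (RtoC (y - x)))) (Cmul (df x) (RtoC (y - x)))).
  { apply Cext; simpl; ring. }
  rewrite E. eapply Rle_lt_trans; [apply Cmod_triangle|]. rewrite Cmod_mul, Cmod_RtoC.
  assert (Rabs (y - x) * K < eps).
  { assert (Rabs (y - x) < eps / K) by lra. assert (eps / K * K = eps) by (field; lra). nra. }
  unfold K in H2. pose proof (Rabs_pos (y - x)). nra.
Qed.

Definition clamp a b x := Rmax a (Rmin b x).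

Lemma clamp_in a b x : a <= b -> a <= clamp a b x <= b.
Proof. intros; unfold clamp; split; [apply Rmax_l|]. apply Rmax_lub; [lra|apply Rmin_l]. Qed.

Lemma clamp_id a b x : a <= x <= b -> clamp a b x = x.
Proof. intros; unfold clamp. rewrite Rmin_right by lra. rewrite Rmax_right by lra. auto. Qed.

Lemma clamp_lip a b x z : a <= z <= b -> Rabs (clamp a b x - z) <= Rabs (x - z).
Proof.
  intros Hz. unfold clamp. destruct (Rle_dec x a).
  - rewrite Rmin_right by lra. rewrite Rmax_left by lra. rewrite !Rabs_left1 by lra. lra.
  - destruct (Rle_dec x b).
    + rewrite Rmin_right by lra. rewrite Rmax_right by lra. lra.
    + rewrite Rmin_left by lra. rewrite Rmax_right by lra. rewrite !Rabs_right by lra. lra.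
Qed.

Lemma cont_comp_clamp S f (g : Cplx -> R) a b z : convex S -> cont_within S f -> S a -> S b -> a <= z <= b ->
  (forall u v, Rabs (g u - g v) <= Cmod (Csub u v)) ->
  continuity_pt (fun x => g (f (clamp a b x))) z.
Proof.
  intros HS Hc Ha Hb Hz Hg. assert (Sz: S z) by (apply (HS a b); auto).
  unfold continuity_pt, continue_in, limit1_in, limit_in. intros eps He. simpl.
  destruct (Hc z Sz eps He) as [d [Hd Hd']]. exists d; split; auto.
  intros x [_ Hx]. unfold R_dist in *. rewrite (clamp_id a b z) by lra.
  assert (a <= b) by lra. pose proof (clamp_in a b x H).
  eapply Rle_lt_trans; [apply Hg|]. apply Hd'.
  - apply (HS a b); auto.
  - eapply Rle_lt_trans; [apply (clamp_lip a b x z); lra | exact Hx].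
Qed.

Lemma cnorm2_ex_RInt S f a b : convex S -> cont_within S f -> S a -> S b -> a <= b ->
  ex_RInt (fun x => Cnorm2 (f x)) a b.
Proof.
  intros HS Hc Ha Hb Hab.
  apply (ex_RInt_ext (fun x => Cnorm2 (f (clamp a b x)))).
  { intros x Hx. rewrite Rmin_left, Rmax_right in Hx by lra. rewrite clamp_id by lra. auto. }
  apply (@ex_RInt_continuous R_CompleteNormedModule). intros z Hz. rewrite Rmin_left, Rmax_right in Hz by lra.
  apply continuity_pt_filterlim.
  assert (C1: continuity_pt (fun x => Re (f (clamp a b x))) z).
  { apply (cont_comp_clamp S f Re); auto. intros u v. rewrite <- Re_le_Cmod. simpl. right; f_equal; ring. }
  assert (C2: continuity_pt (fun x => Im (f (clamp a b x))) z).
  { apply (cont_comp_clamp S f Im); auto. intros u v. rewrite <- Im_le_Cmod. simpl. right; f_equal; ring. }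
  eapply continuity_pt_ext; [|apply continuity_pt_plus; apply continuity_pt_mult; [apply C1|apply C1|apply C2|apply C2]].
  intro x. reflexivity.
Qed.

Definition Fadd (f g : R -> Cplx) := fun x => Cadd (f x) (g x).

Lemma deriv_add S f df g dg : has_deriv_within S f df -> has_deriv_within S g dg ->
  has_deriv_within S (Fadd f g) (Fadd df dg).
Proof.
  intros Hf Hg x Hx eps He.
  destruct (Hf x Hx (eps/2) ltac:(lra)) as [d1 [Hd1 H1]].
  destruct (Hg x Hx (eps/2) ltac:(lra)) as [d2 [Hd2 H2]].
  exists (Rmin d1 d2); split; [apply Rmin_pos; auto|].
  intros y Hy Hyx. pose proof (Rmin_l d1 d2); pose proof (Rmin_r d1 d2).
  specialize (H1 y Hy ltac:(lra)); specialize (H2 y Hy ltac:(lra)).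
  unfold Fadd.
  match goal with |- Cmod ?Z <= _ => assert (E: Z = Cadd (Csub (Csub (f y) (f x)) (Cmul (df x) (RtoC (y - x))))
     (Csub (Csub (g y) (g x)) (Cmul (dg x) (RtoC (y - x))))) by (apply Cext; simpl; ring) end.
  rewrite E. eapply Rle_trans; [apply Cmod_triangle|]. lra.
Qed.

Lemma variation_add f g l : variation (Fadd f g) l <= variation f l + variation g l.
Proof.
  induction l as [|[a b] l IH]; simpl; [lra|].
  assert (E: Csub (Fadd f g b) (Fadd f g a) = Cadd (Csub (f b) (f a)) (Csub (g b) (g a))) by (apply Cext; unfold Fadd; simpl; ring).
  rewrite E. pose proof (Cmod_triangle (Csub (f b) (f a)) (Csub (g b) (g a))). lra.
Qed.

Lemma lac_add S f g : loc_abs_cont S f -> loc_abs_cont S g -> loc_abs_cont S (Fadd f g).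
Proof.
  intros Hf Hg lo hi Hlo Hhi Hlh eps He.
  destruct (Hf lo hi Hlo Hhi Hlh (eps/2) ltac:(lra)) as [d1 [Hd1 H1]].
  destruct (Hg lo hi Hlo Hhi Hlh (eps/2) ltac:(lra)) as [d2 [Hd2 H2]].
  exists (Rmin d1 d2); split; [apply Rmin_pos; auto|].
  intros l Ho Hfa Ht. pose proof (Rmin_l d1 d2); pose proof (Rmin_r d1 d2).
  specialize (H1 l Ho Hfa ltac:(lra)); specialize (H2 l Ho Hfa ltac:(lra)).
  pose proof (variation_add f g l). lra.
Qed.

Lemma RInt_lin2 (F G : R -> R) a b : ex_RInt F a b -> ex_RInt G a b ->
  ex_RInt (fun x => 2 * F x + 2 * G x) a b /\
  RInt (fun x => 2 * F x + 2 * G x) a b = 2 * RInt F a b + 2 * RInt G a b.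
Proof.
  intros HF HG.
  assert (H: is_RInt (fun x => 2 * F x + 2 * G x) a b (2 * RInt F a b + 2 * RInt G a b)).
  { apply (is_RInt_plus (fun x => 2 * F x) (fun x => 2 * G x)).
    - apply (is_RInt_scal F a b 2 (RInt F a b)). apply (@RInt_correct R_CompleteNormedModule); auto.
    - apply (is_RInt_scal G a b 2 (RInt G a b)). apply (@RInt_correct R_CompleteNormedModule); auto. }
  split; [exists (2 * RInt F a b + 2 * RInt G a b); exact H|]. apply is_RInt_unique; exact H.
Qed.

Lemma sq_add S f df g dg : convex S -> has_deriv_within S f df -> has_deriv_within S g dg ->
  square_integrable_on S f -> square_integrable_on S g -> square_integrable_on S (Fadd f g).
Proof.
  intros HS Df Dg [M1 H1] [M2 H2]. exists (2 * M1 + 2 * M2). intros a b Ha Hb Hab.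
  destruct (H1 a b Ha Hb Hab) as [p1 Hp1]. destruct (H2 a b Ha Hb Hab) as [p2 Hp2].
  pose proof (cnorm2_ex_RInt S _ a b HS (deriv_cont _ _ _ (deriv_add _ _ _ _ _ Df Dg)) Ha Hb Hab) as Hfg.
  exists (ex_RInt_Reals_0 _ _ _ Hfg). rewrite <- RInt_Reals.
  pose proof (ex_RInt_Reals_1 _ _ _ p1) as E1. pose proof (ex_RInt_Reals_1 _ _ _ p2) as E2.
  destruct (RInt_lin2 _ _ a b E1 E2) as [E3 E4].
  eapply Rle_trans; [apply (RInt_le _ _ a b Hab Hfg E3)|].
  - intros x _. unfold Fadd. pose proof (Cnorm2_add_le (f x) (g x)); lra.
  - rewrite E4, (RInt_Reals _ _ _ p1), (RInt_Reals _ _ _ p2). lra.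
Qed.

Lemma riesz_add f g l : Forall (fun p => fst p < snd p) l ->
  riesz2_sum (Fadd f g) l <= 2 * riesz2_sum f l + 2 * riesz2_sum g l.
Proof.
  induction l as [|[a b] l IH]; simpl; intros Hl; [lra|]. inversion Hl; subst. simpl in H1.
  specialize (IH H2).
  assert (E: Csub (Fadd f g b) (Fadd f g a) = Cadd (Csub (f b) (f a)) (Csub (g b) (g a))) by (apply Cext; unfold Fadd; simpl; ring).
  rewrite E. pose proof (Cnorm2_add_le (Csub (f b) (f a)) (Csub (g b) (g a))).
  assert (Cnorm2 (Cadd (Csub (f b) (f a)) (Csub (g b) (g a))) / (b - a) <=
     2 * (Cnorm2 (Csub (f b) (f a)) / (b - a)) + 2 * (Cnorm2 (Csub (g b) (g a)) / (b - a))).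
  { unfold Rdiv. assert (0 < / (b - a)) by (apply Rinv_0_lt_compat; lra). nra. }
  lra.
Qed.

Lemma dsq_add S f g : convex S -> deriv_square_integrable_on S f -> deriv_square_integrable_on S g ->
  deriv_square_integrable_on S (Fadd f g).
Proof.
  intros HS [M1 H1] [M2 H2]. exists (2 * M1 + 2 * M2). intros c l Ho Hf.
  eapply Rle_trans; [apply riesz_add|].
  - pose proof (ord_facts _ _ Ho). eapply Forall_impl; [|exact H]. intros [a b] HH; simpl in *; lra.
  - specialize (H1 c l Ho Hf); specialize (H2 c l Ho Hf). lra.
Qed.

Lemma Hstar_on_add S f df g dg : convex S -> Hstar_on S f df -> Hstar_on S g dg ->
  Hstar_on S (Fadd f g) (Fadd df dg).
Proof.
  intros HS [A1 [A2 [A3 [A4 A5]]]] [B1 [B2 [B3 [B4 B5]]]].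
  repeat split.
  - apply deriv_add; auto.
  - apply lac_add; auto.
  - apply lac_add; auto.
  - eapply sq_add; eauto.
  - apply dsq_add; auto.
Qed.

Lemma deriv_unique S f d1 d2 x : has_deriv_within S f d1 -> has_deriv_within S f d2 -> S x ->
  (forall delta, 0 < delta -> exists y, S y /\ y <> x /\ Rabs (y - x) < delta) -> d1 x = d2 x.
Proof.
  intros H1 H2 Hx Hacc.
  assert (Z: Cmod (Csub (d1 x) (d2 x)) = 0).
  { apply Rle_antisym; [|apply Cmod_ge0].
    apply Rnot_lt_le; intro Hlt. set (m := Cmod (Csub (d1 x) (d2 x))) in *.
    destruct (H1 x Hx (m/4) ltac:(lra)) as [e1 [He1 K1]].
    destruct (H2 x Hx (m/4) ltac:(lra)) as [e2 [He2 K2]].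
    destruct (Hacc (Rmin e1 e2) (Rmin_pos _ _ He1 He2)) as [y [Sy [Hyx Hd]]].
    pose proof (Rmin_l e1 e2); pose proof (Rmin_r e1 e2).
    specialize (K1 y Sy ltac:(lra)); specialize (K2 y Sy ltac:(lra)).
    assert (E: Cmul (Csub (d1 x) (d2 x)) (RtoC (y - x)) =
      Cadd (Csub (Csub (f y) (f x)) (Cmul (d2 x) (RtoC (y - x))))
           (Copp (Csub (Csub (f y) (f x)) (Cmul (d1 x) (RtoC (y - x)))))) by (apply Cext; simpl; ring).
    assert (Cmod (Copp (Csub (Csub (f y) (f x)) (Cmul (d1 x) (RtoC (y - x))))) =
            Cmod (Csub (Csub (f y) (f x)) (Cmul (d1 x) (RtoC (y - x))))).
    { unfold Cmod, Cnorm2; simpl; f_equal; ring. }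
    pose proof (Cmod_triangle (Csub (Csub (f y) (f x)) (Cmul (d2 x) (RtoC (y - x))))
                 (Copp (Csub (Csub (f y) (f x)) (Cmul (d1 x) (RtoC (y - x)))))).
    rewrite <- E, Cmod_mul, Cmod_RtoC in H4. fold m in H4.
    assert (0 < Rabs (y - x)) by (apply Rabs_pos_lt; lra). nra. }
  pose proof (Cmod_eq0 _ Z). apply Cext.
  - assert (Re (Csub (d1 x) (d2 x)) = 0) by (rewrite H; reflexivity). simpl in H0; lra.
  - assert (Im (Csub (d1 x) (d2 x)) = 0) by (rewrite H; reflexivity). simpl in H0; lra.
Qed.

Definition E (B : Cplx) (r w : R) (x : R) : Cplx := Cmul B (Cmul (RtoC (exp (r * x))) (Cexpi (w * x))).
Definition Ed (B : Cplx) (r w : R) := E (Cmul B (mkC r w)) r w.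
Definition beta (B : Cplx) := Rabs (Re B) + Rabs (Im B).

Lemma ReE B r w x : Re (E B r w x) = exp (r*x) * (Re B * cos (w*x) - Im B * sin (w*x)).
Proof. unfold E; simpl; ring. Qed.
Lemma ImE B r w x : Im (E B r w x) = exp (r*x) * (Re B * sin (w*x) + Im B * cos (w*x)).
Proof. unfold E; simpl; ring. Qed.

Lemma derRe B r w x : derivable_pt_lim (fun y => Re (E B r w y)) x (Re (Ed B r w x)).
Proof.
  apply is_derive_Reals.
  apply (is_derive_ext (fun y => exp (r*y) * (Re B * cos (w*y) - Im B * sin (w*y)))).
  { intro t; rewrite ReE; reflexivity. }
  auto_derive; auto. unfold Ed, E; simpl; ring.
Qed.
Lemma derIm B r w x : derivable_pt_lim (fun y => Im (E B r w y)) x (Im (Ed B r w x)).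
Proof.
  apply is_derive_Reals.
  apply (is_derive_ext (fun y => exp (r*y) * (Re B * sin (w*y) + Im B * cos (w*y)))).
  { intro t; rewrite ImE; reflexivity. }
  auto_derive; auto. unfold Ed, E; simpl; ring.
Qed.

Lemma trig_bound u v c s : -1 <= c <= 1 -> -1 <= s <= 1 -> Rabs (u * c - v * s) <= Rabs u + Rabs v.
Proof.
  intros Hc Hs. eapply Rle_trans; [apply Rabs_triang|]. rewrite Rabs_Ropp, !Rabs_mult.
  assert (Rabs c <= 1) by (apply Rabs_le; lra). assert (Rabs s <= 1) by (apply Rabs_le; lra).
  pose proof (Rabs_pos u); pose proof (Rabs_pos v); pose proof (Rabs_pos c); pose proof (Rabs_pos s). nra.
Qed.

Lemma boundRe B r w x : Rabs (Re (E B r w x)) <= beta B * exp (r * x).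
Proof.
  rewrite ReE, Rabs_mult, (Rabs_right (exp _)) by (left; apply exp_pos).
  rewrite Rmult_comm. apply Rmult_le_compat_r; [left; apply exp_pos|].
  apply trig_bound; [apply COS_bound|apply SIN_bound].
Qed.
Lemma boundIm B r w x : Rabs (Im (E B r w x)) <= beta B * exp (r * x).
Proof.
  rewrite ImE, Rabs_mult, (Rabs_right (exp _)) by (left; apply exp_pos).
  rewrite Rmult_comm. apply Rmult_le_compat_r; [left; apply exp_pos|].
  replace (Re B * sin (w * x) + Im B * cos (w * x)) with (Re B * sin (w*x) - (- Im B) * cos (w*x)) by ring.
  unfold beta. rewrite <- (Rabs_Ropp (Im B)).
  apply trig_bound; [apply SIN_bound|apply COS_bound].
Qed.

Lemma Re_sub z w : Re (Csub z w) = Re z - Re w.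
Proof. simpl; ring. Qed.
Lemma Im_sub z w : Im (Csub z w) = Im z - Im w.
Proof. simpl; ring. Qed.

Lemma beta_ge0 B : 0 <= beta B.
Proof. unfold beta; pose proof (Rabs_pos (Re B)); pose proof (Rabs_pos (Im B)); lra. Qed.

Lemma mvt_bound f f' h h' a b : a <= b -> (forall x, derivable_pt_lim f x (f' x)) ->
  (forall x, derivable_pt_lim h x (h' x)) -> (forall x, a <= x <= b -> Rabs (f' x) <= h' x) ->
  Rabs (f b - f a) <= h b - h a.
Proof.
  intros Hab Hf Hh Hb. destruct (Req_dec a b) as [->|Hne].
  { replace (f b - f b) with 0 by ring. rewrite Rabs_R0. lra. }
  assert (Hlt: a < b) by lra.
  destruct (MVT_cor2 (fun x => h x - f x) (fun x => h' x - f' x) a b Hlt) as [c1 [E1 H1]].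
  { intros c _. apply derivable_pt_lim_minus; auto. }
  destruct (MVT_cor2 (fun x => h x + f x) (fun x => h' x + f' x) a b Hlt) as [c2 [E2 H2]].
  { intros c _. apply derivable_pt_lim_plus; auto. }
  specialize (Hb c1 ltac:(lra)) as B1. specialize (Hb c2 ltac:(lra)) as B2.
  apply Rabs_le_between in B1; apply Rabs_le_between in B2.
  apply Rabs_le. split; nra.
Qed.

Lemma exp_le_mono x y : x <= y -> exp x <= exp y.
Proof. intros H; destruct (Rle_lt_or_eq_dec _ _ H) as [H'|H']; [left; apply exp_increasing; auto|subst; lra]. Qed.

Lemma exp_between r lo hi x : lo <= x <= hi -> exp (r * x) <= exp (r * lo) + exp (r * hi).
Proof.
  intros Hx. pose proof (exp_pos (r*lo)); pose proof (exp_pos (r*hi)).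
  destruct (Rle_dec 0 r).
  - assert (exp (r*x) <= exp (r*hi)) by (apply exp_le_mono; nra). lra.
  - assert (exp (r*x) <= exp (r*lo)) by (apply exp_le_mono; nra). lra.
Qed.

Lemma E_lip B r w lo a b hi : lo <= a -> a <= b -> b <= hi ->
  Cmod (Csub (E B r w b) (E B r w a)) <= 2 * (beta (Cmul B (mkC r w)) * (exp (r*lo) + exp (r*hi))) * (b - a).
Proof.
  intros H1 H2 H3. set (M := beta (Cmul B (mkC r w)) * (exp (r*lo) + exp (r*hi))).
  assert (HM: forall x, lo <= x <= hi -> beta (Cmul B (mkC r w)) * exp (r*x) <= M).
  { intros x Hx. unfold M. apply Rmult_le_compat_l; [apply beta_ge0|]. apply exp_between; auto. }
  assert (A: Rabs (Re (E B r w b) - Re (E B r w a)) <= M * b - M * a).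
  { apply (mvt_bound (fun y => Re (E B r w y)) (fun y => Re (Ed B r w y)) (fun y => M * y) (fun _ => M)); auto.
    - intro x; apply derRe.
    - intro x. apply is_derive_Reals. auto_derive; auto; ring.
    - intros x Hx. eapply Rle_trans; [apply boundRe|]. apply HM; lra. }
  assert (B': Rabs (Im (E B r w b) - Im (E B r w a)) <= M * b - M * a).
  { apply (mvt_bound (fun y => Im (E B r w y)) (fun y => Im (Ed B r w y)) (fun y => M * y) (fun _ => M)); auto.
    - intro x; apply derIm.
    - intro x. apply is_derive_Reals. auto_derive; auto; ring.
    - intros x Hx. eapply Rle_trans; [apply boundIm|]. apply HM; lra. }
  eapply Rle_trans; [apply Cmod_le_abs|]. rewrite Re_sub, Im_sub. lra.
Qed.

Lemma dpl_bound f x l eps : derivable_pt_lim f x l -> 0 < eps -> exists d, 0 < d /\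
  forall y, Rabs (y - x) < d -> Rabs (f y - f x - l * (y - x)) <= eps * Rabs (y - x).
Proof.
  intros H He. destruct (H eps He) as [d Hd]. exists d; split; [apply cond_pos|].
  intros y Hy. destruct (Req_dec y x) as [->|Hne].
  { replace (f x - f x - l * (x - x)) with 0 by ring. rewrite Rabs_R0. pose proof (Rabs_pos (x - x)). nra. }
  specialize (Hd (y - x) ltac:(lra) Hy). replace (x + (y - x)) with y in Hd by ring.
  replace (f y - f x - l * (y - x)) with (((f y - f x) / (y - x) - l) * (y - x)) by (field; lra).
  rewrite Rabs_mult. apply Rmult_le_compat_r; [apply Rabs_pos|lra].
Qed.

Lemma deriv_components S f df : (forall x, derivable_pt_lim (fun y => Re (f y)) x (Re (df x))) ->
  (forall x, derivable_pt_lim (fun y => Im (f y)) x (Im (df x))) -> has_deriv_within S f df.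
Proof.
  intros HR HI x _ eps He.
  destruct (dpl_bound _ _ _ (eps/2) (HR x) ltac:(lra)) as [d1 [Hd1 H1]].
  destruct (dpl_bound _ _ _ (eps/2) (HI x) ltac:(lra)) as [d2 [Hd2 H2]].
  exists (Rmin d1 d2); split; [apply Rmin_pos; auto|]. intros y _ Hy.
  pose proof (Rmin_l d1 d2); pose proof (Rmin_r d1 d2).
  specialize (H1 y ltac:(lra)); specialize (H2 y ltac:(lra)).
  eapply Rle_trans; [apply Cmod_le_abs|]. simpl.
  replace (Re (f y) + - Re (f x) + - (Re (df x) * (y - x) - Im (df x) * 0)) with (Re (f y) - Re (f x) - Re (df x) * (y - x)) by ring.
  replace (Im (f y) + - Im (f x) + - (Re (df x) * 0 + Im (df x) * (y - x))) with (Im (f y) - Im (f x) - Im (df x) * (y - x)) by ring.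
  lra.
Qed.

Lemma E_deriv S B r w : has_deriv_within S (E B r w) (Ed B r w).
Proof. apply deriv_components; intro x; [apply derRe|apply derIm]. Qed.

Lemma E_lac S B r w : loc_abs_cont S (E B r w).
Proof.
  intros lo hi _ _ Hlh eps He.
  set (M := 2 * (beta (Cmul B (mkC r w)) * (exp (r*lo) + exp (r*hi)))).
  assert (HM: 0 <= M).
  { unfold M. pose proof (beta_ge0 (Cmul B (mkC r w))). pose proof (exp_pos (r*lo)); pose proof (exp_pos (r*hi)). nra. }
  exists (eps / (M + 1)). split; [apply Rdiv_lt_0_compat; lra|].
  intros l Ho Hf Ht.
  assert (V: variation (E B r w) l <= M * total_length l).
  { pose proof (Forall_and2 _ _ _ (ord_facts _ _ Ho) Hf) as H. clear -H.
    induction l as [|[a b] l IH]; simpl; [lra|]. inversion H; subst. simpl in H2.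
    specialize (IH H3). pose proof (E_lip B r w lo a b hi ltac:(lra) ltac:(lra) ltac:(lra)). fold M in H0. nra. }
  assert (0 <= total_length l).
  { pose proof (ord_facts _ _ Ho) as H. clear -H. induction l as [|[a b] l IH]; simpl; [lra|].
    inversion H; subst. simpl in H2. specialize (IH H3). lra. }
  assert (M * total_length l < eps).
  { assert (total_length l * (M + 1) < eps) by (apply (Rmult_lt_compat_r (M+1)) in Ht; [|lra]; field_simplify in Ht; lra).
    nra. }
  lra.
Qed.

Lemma Cnorm2_E B r w x : Cnorm2 (E B r w x) = Cnorm2 B * (exp (r*x) * exp (r*x)).
Proof.
  unfold Cnorm2. rewrite ReE, ImE. pose proof (sin2_cos2 (w*x)). unfold Rsqr in H.
  transitivity (exp (r * x) * exp (r * x) * (Re B * Re B + Im B * Im B) * (sin (w * x) * sin (w * x) + cos (w * x) * cos (w * x))); [ring|].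
  rewrite H; ring.
Qed.

Lemma G_bound r x : r <> 0 -> r * x <= 0 -> Rabs (exp (r*x) * exp (r*x) / (2*r)) <= 1 / (2 * Rabs r).
Proof.
  intros Hr Hx. assert (exp (r*x) <= 1) by (rewrite <- exp_0; apply exp_le_mono; lra).
  pose proof (exp_pos (r*x)).
  assert (Hq: 0 < exp (r*x) * exp (r*x) <= 1) by (split; nra).
  set (q := exp (r*x) * exp (r*x)) in *.
  destruct (Rlt_or_le 0 r) as [Hp|Hn].
  - rewrite (Rabs_right r) by lra.
    assert (0 < / (2 * r)) by (apply Rinv_0_lt_compat; lra).
    rewrite Rabs_right.
    + unfold Rdiv. apply Rmult_le_compat_r; lra.
    + apply Rle_ge; unfold Rdiv; apply Rmult_le_pos; lra.
  - assert (r < 0) by lra. rewrite (Rabs_left r) by lra.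
    assert (0 < / (2 * - r)) by (apply Rinv_0_lt_compat; lra).
    replace (q / (2 * r)) with (- (q / (2 * - r))) by (field; lra).
    rewrite Rabs_Ropp. rewrite Rabs_right.
    + unfold Rdiv. apply Rmult_le_compat_r; lra.
    + apply Rle_ge; unfold Rdiv; apply Rmult_le_pos; lra.
Qed.

Lemma E_sq S B r w : convex S -> r <> 0 -> (forall x, S x -> r * x <= 0) -> square_integrable_on S (E B r w).
Proof.
  intros HS Hr Hneg. exists (Cnorm2 B * (1 / Rabs r)). intros a b Ha Hb Hab.
  set (G := fun x => Cnorm2 B * (exp (r*x) * exp (r*x) / (2*r))).
  assert (I: is_RInt (fun x => Cnorm2 (E B r w x)) a b (G b - G a)).
  { apply (is_RInt_ext (fun x => Cnorm2 B * (exp (r*x) * exp (r*x)))).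
    { intros x _. rewrite Cnorm2_E; auto. }
    apply (@is_RInt_derive R_CompleteNormedModule G).
    - intros x _. unfold G. auto_derive; auto. field; auto.
    - intros x _. apply (@ex_derive_continuous R_AbsRing R_NormedModule). auto_derive; auto. }
  assert (Ex: ex_RInt (fun x => Cnorm2 (E B r w x)) a b) by (eexists; exact I).
  exists (ex_RInt_Reals_0 _ _ _ Ex). rewrite <- RInt_Reals. rewrite (is_RInt_unique _ _ _ _ I).
  unfold G. pose proof (G_bound r a Hr (Hneg a Ha)). pose proof (G_bound r b Hr (Hneg b Hb)).
  apply Rabs_le_between in H; apply Rabs_le_between in H0. pose proof (Cnorm2_ge0 B).
  assert (1 / Rabs r = 1 / (2 * Rabs r) + 1 / (2 * Rabs r)) by (assert (0 < Rabs r) by (apply Rabs_pos_lt; auto); field; lra).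
  rewrite H2. unfold minus, plus, opp; simpl. nra.
Qed.

Lemma telescope (T : R * R -> R) (G : R -> R) U (S : R -> Prop) c l : 0 <= U ->
  (forall a b, S a -> S b -> a < b -> T (a, b) <= G b - G a) -> (forall a b, a <= b -> G a <= G b) ->
  (forall x, S x -> Rabs (G x) <= U) -> ordered_intervals c l ->
  Forall (fun p => S (fst p) /\ S (snd p)) l -> fold_right (fun p s => T p + s) 0 l <= 2 * U.
Proof.
  intros HU HT HG HB Ho Hf.
  assert (Claim: forall l c, S c -> ordered_intervals c l -> Forall (fun p => S (fst p) /\ S (snd p)) l ->
     fold_right (fun p s => T p + s) 0 l <= U - G c).
  { clear c l Ho Hf. induction l as [|[a b] l IH]; intros c Sc Ho Hf; simpl.
    - pose proof (HB c Sc). apply Rabs_le_between in H. lra.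
    - destruct Ho as [H1 [H2 H3]]. inversion Hf; subst. simpl in H4. destruct H4 as [Sa Sb].
      specialize (IH b Sb H3 H5). pose proof (HT a b Sa Sb H2). pose proof (HG c a H1). lra. }
  destruct l as [|[a b] l]; simpl; [lra|].
  inversion Hf; subst. simpl in H1. destruct H1 as [Sa Sb].
  assert (ordered_intervals a ((a, b) :: l)) by (simpl in Ho |- *; destruct Ho as [? [? ?]]; repeat split; auto; lra).
  pose proof (Claim ((a,b)::l) a Sa H Hf). simpl in H0.
  pose proof (HB a Sa). apply Rabs_le_between in H1. lra.
Qed.

Definition Gf (r x : R) := exp (r*x) * exp (r*x) / (2*r).

Lemma D_nonneg r a b : r <> 0 -> a <= b -> 0 <= exp (r*b) / r - exp (r*a) / r.
Proof.
  intros Hr Hab.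
  pose proof (mvt_bound (fun _ => 0) (fun _ => 0) (fun x => exp (r*x) / r) (fun x => exp (r*x)) a b Hab).
  assert (Rabs (0 - 0) <= exp (r * b) / r - exp (r * a) / r).
  { apply H.
    - intro x. apply derivable_pt_lim_const.
    - intro x. apply is_derive_Reals. auto_derive; auto. field; auto.
    - intros x _. rewrite Rabs_R0. left; apply exp_pos. }
  pose proof (Rabs_pos (0 - 0)). lra.
Qed.

Lemma D_upper r a b : r <> 0 -> a <= b -> exp (r*b) / r - exp (r*a) / r <= (exp (r*a) + exp (r*b)) * (b - a).
Proof.
  intros Hr Hab.
  assert (Rabs (exp (r*b) / r - exp (r*a) / r) <= (exp (r*a) + exp (r*b)) * b - (exp (r*a) + exp (r*b)) * a).
  { apply (mvt_bound (fun x => exp (r*x) / r) (fun x => exp (r*x)) (fun x => (exp (r*a) + exp (r*b)) * x) (fun _ => exp (r*a) + exp (r*b))); auto.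
    - intro x. apply is_derive_Reals. auto_derive; auto. field; auto.
    - intro x. apply is_derive_Reals. auto_derive; auto. ring.
    - intros x Hx. rewrite Rabs_right by (left; apply exp_pos). apply exp_between; auto. }
  pose proof (Rle_abs (exp (r*b) / r - exp (r*a) / r)). lra.
Qed.

Lemma Gf_mono r a b : r <> 0 -> a <= b -> Gf r a <= Gf r b.
Proof.
  intros Hr Hab. pose proof (D_nonneg r a b Hr Hab).
  assert (Gf r b - Gf r a = (exp (r*b) / r - exp (r*a) / r) * (exp (r*a) + exp (r*b)) / 2) by (unfold Gf; field; auto).
  pose proof (exp_pos (r*a)); pose proof (exp_pos (r*b)).
  assert (0 <= (exp (r*b) / r - exp (r*a) / r) * (exp (r*a) + exp (r*b)) / 2).
  { unfold Rdiv at 3. apply Rmult_le_pos; [apply Rmult_le_pos; lra|lra]. }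
  lra.
Qed.

Lemma comp_diff_bound (g : R -> R) (g' : R -> R) K r a b : r <> 0 -> a <= b -> 0 <= K ->
  (forall x, derivable_pt_lim g x (g' x)) -> (forall x, Rabs (g' x) <= K * exp (r*x)) ->
  Rabs (g b - g a) <= K * (exp (r*b) / r - exp (r*a) / r).
Proof.
  intros Hr Hab HK Hg Hb.
  assert (Rabs (g b - g a) <= K * exp (r*b) / r - K * exp (r*a) / r).
  { apply (mvt_bound g g' (fun x => K * exp (r*x) / r) (fun x => K * exp (r*x))); auto.
    intro x. apply is_derive_Reals. auto_derive; auto. field; auto. }
  replace (K * (exp (r * b) / r - exp (r * a) / r)) with (K * exp (r * b) / r - K * exp (r * a) / r) by (field; auto).
  auto.
Qed.

Lemma E_riesz_term B r w a b : r <> 0 -> a < b ->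
  Cnorm2 (Csub (E B r w b) (E B r w a)) / (b - a) <=
  4 * (beta (Cmul B (mkC r w)))² * Gf r b - 4 * (beta (Cmul B (mkC r w)))² * Gf r a.
Proof.
  intros Hr Hab. set (K := beta (Cmul B (mkC r w))). pose proof (beta_ge0 (Cmul B (mkC r w))) as HK. fold K in HK.
  set (D := exp (r*b) / r - exp (r*a) / r).
  pose proof (D_nonneg r a b Hr ltac:(lra)) as HD0. fold D in HD0.
  pose proof (D_upper r a b Hr ltac:(lra)) as HD1. fold D in HD1.
  assert (A: Rabs (Re (E B r w b) - Re (E B r w a)) <= K * D).
  { apply (comp_diff_bound (fun y => Re (E B r w y)) (fun y => Re (Ed B r w y))); auto; try lra.
    - intro x; apply derRe.
    - intro x; unfold Ed; apply boundRe. }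
  assert (A': Rabs (Im (E B r w b) - Im (E B r w a)) <= K * D).
  { apply (comp_diff_bound (fun y => Im (E B r w y)) (fun y => Im (Ed B r w y))); auto; try lra.
    - intro x; apply derIm.
    - intro x; unfold Ed; apply boundIm. }
  apply Rabs_le_between in A; apply Rabs_le_between in A'.
  assert (N: Cnorm2 (Csub (E B r w b) (E B r w a)) <= 2 * (K * D) * (K * D)).
  { unfold Cnorm2. rewrite Re_sub, Im_sub. nra. }
  pose proof (exp_pos (r*a)); pose proof (exp_pos (r*b)).
  assert (Eq: 4 * K² * Gf r b - 4 * K² * Gf r a = 2 * K * K * D * (exp (r*a) + exp (r*b))).
  { unfold Gf, D, Rsqr. field; auto. }
  rewrite Eq. apply Rle_div_l; [lra|].
  assert (D * D <= D * ((exp (r*a) + exp (r*b)) * (b - a))) by (apply Rmult_le_compat_l; auto).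
  assert (0 <= K * K) by nra.
  nra.
Qed.

Lemma E_dsq S B r w : convex S -> r <> 0 -> (forall x, S x -> r * x <= 0) -> deriv_square_integrable_on S (E B r w).
Proof.
  intros HS Hr Hneg. set (K := beta (Cmul B (mkC r w))).
  exists (2 * (4 * K² * (1 / (2 * Rabs r)))). intros c l Ho Hf.
  unfold riesz2_sum.
  apply (telescope (fun p => Cnorm2 (Csub (E B r w (snd p)) (E B r w (fst p))) / (snd p - fst p))
           (fun x => 4 * K² * Gf r x) (4 * K² * (1 / (2 * Rabs r))) S c l); auto.
  - assert (0 < Rabs r) by (apply Rabs_pos_lt; auto). pose proof (Rle_0_sqr K).
    apply Rmult_le_pos; [lra|]. unfold Rdiv. rewrite Rmult_1_l. left; apply Rinv_0_lt_compat; lra.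
  - intros a b _ _ Hab. simpl. apply E_riesz_term; auto.
  - intros a b Hab. pose proof (Gf_mono r a b Hr Hab). pose proof (Rle_0_sqr K). nra.
  - intros x Hx. rewrite Rabs_mult, (Rabs_right (4 * K²)) by (pose proof (Rle_0_sqr K); lra).
    apply Rmult_le_compat_l; [pose proof (Rle_0_sqr K); lra|]. apply G_bound; auto.
Qed.

Lemma Hstar_E S B r w : convex S -> r <> 0 -> (forall x, S x -> r * x <= 0) -> Hstar_on S (E B r w) (Ed B r w).
Proof.
  intros HS Hr Hneg. repeat split.
  - apply E_deriv.
  - apply E_lac.
  - apply E_lac.
  - apply E_sq; auto.
  - apply E_dsq; auto.
Qed.

Definition s := / sqrt 2.
Definition ga Lam theta := theta + sqrt 2 * Lam + 3 * PI / 4.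
Definition gb Lam theta := - theta + sqrt 2 * Lam + 3 * PI / 4.
Definition B1l Lam := Cmul (Cexpi 0) (RtoC (Nc Lam)).
Definition B1r Lam theta := Cmul (Cexpi (ga Lam theta)) (RtoC (Nc Lam)).
Definition B2l Lam theta := Cmul (Cexpi (gb Lam theta)) (RtoC (Nc Lam)).
Definition B2r Lam := Cmul (Cexpi 0) (RtoC (Nc Lam)).

Definition F1 Lam theta x := Cadd (Lplus Lam x) (Cmul (gamma_to Lam theta) (Defs.Rminus Lam x)).
Definition F2 Lam theta x := Cadd (Defs.Rplus Lam x) (Cmul (gamma_from Lam theta) (Lminus Lam x)).
Definition dF1 Lam theta x := if Rlt_dec x 0 then Ed (B1l Lam) s (- s) x else Ed (B1r Lam theta) (- s) (- s) x.
Definition dF2 Lam theta x := if Rlt_dec x 0 then Ed (B2l Lam theta) s s x else Ed (B2r Lam) (- s) s x.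

Lemma s_pos : 0 < s.
Proof. unfold s. apply Rinv_0_lt_compat, sqrt_lt_R0; lra. Qed.

Lemma F1_left Lam th x : x < 0 -> F1 Lam th x = E (B1l Lam) s (- s) x.
Proof.
  intro Hx. unfold F1, Lplus, Defs.Rminus. destruct (Rlt_dec x 0); [|lra]. destruct (Rlt_dec 0 x); [lra|].
  unfold E, B1l, s.
  replace (- / sqrt 2 * x) with (- x / sqrt 2) by (unfold Rdiv; ring).
  replace (/ sqrt 2 * x) with (x / sqrt 2) by (unfold Rdiv; ring).
  apply Cext; simpl; try rewrite cos_0; try rewrite sin_0; ring.
Qed.

Lemma F1_right Lam th x : 0 < x -> F1 Lam th x = E (B1r Lam th) (- s) (- s) x.
Proof.
  intro Hx. unfold F1, Lplus, Defs.Rminus. destruct (Rlt_dec x 0); [lra|]. destruct (Rlt_dec 0 x); [|lra].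
  unfold E, B1r, s, gamma_to, ga.
  replace (- / sqrt 2 * x) with (- x / sqrt 2) by (unfold Rdiv; ring).
  apply Cext; simpl; try rewrite cos_0; try rewrite sin_0; ring.
Qed.

Lemma F2_left Lam th x : x < 0 -> F2 Lam th x = E (B2l Lam th) s s x.
Proof.
  intro Hx. unfold F2, Lminus, Defs.Rplus. destruct (Rlt_dec x 0); [|lra]. destruct (Rlt_dec 0 x); [lra|].
  unfold E, B2l, s, gamma_from, gb.
  replace (/ sqrt 2 * x) with (x / sqrt 2) by (unfold Rdiv; ring).
  apply Cext; simpl; try rewrite cos_0; try rewrite sin_0; ring.
Qed.

Lemma F2_right Lam th x : 0 < x -> F2 Lam th x = E (B2r Lam) (- s) s x.
Proof.
  intro Hx. unfold F2, Lminus, Defs.Rplus. destruct (Rlt_dec x 0); [lra|]. destruct (Rlt_dec 0 x); [|lra].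
  unfold E, B2r, s.
  replace (- / sqrt 2 * x) with (- x / sqrt 2) by (unfold Rdiv; ring).
  replace (/ sqrt 2 * x) with (x / sqrt 2) by (unfold Rdiv; ring).
  apply Cext; simpl; try rewrite cos_0; try rewrite sin_0; ring.
Qed.

Lemma dF1_left Lam th x : x < 0 -> dF1 Lam th x = Ed (B1l Lam) s (- s) x.
Proof. intro; unfold dF1; destruct (Rlt_dec x 0); [auto|lra]. Qed.
Lemma dF1_right Lam th x : 0 < x -> dF1 Lam th x = Ed (B1r Lam th) (- s) (- s) x.
Proof. intro; unfold dF1; destruct (Rlt_dec x 0); [lra|auto]. Qed.
Lemma dF2_left Lam th x : x < 0 -> dF2 Lam th x = Ed (B2l Lam th) s s x.
Proof. intro; unfold dF2; destruct (Rlt_dec x 0); [auto|lra]. Qed.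
Lemma dF2_right Lam th x : 0 < x -> dF2 Lam th x = Ed (B2r Lam) (- s) s x.
Proof. intro; unfold dF2; destruct (Rlt_dec x 0); [lra|auto]. Qed.

Lemma E_scale c B r w x : E (Cmul c B) r w x = Cmul c (E B r w x).
Proof. unfold E; apply Cext; simpl; ring. Qed.
Lemma Ed_scale c B r w x : Ed (Cmul c B) r w x = Cmul c (Ed B r w x).
Proof. unfold Ed, E; apply Cext; simpl; ring. Qed.

Lemma Hstar_scaled_left Lam c B r w : 0 < Lam -> 0 < r ->
  forall f df, (forall x, x < 0 -> f x = E B r w x) -> (forall x, x < 0 -> df x = Ed B r w x) ->
  Hstar_on (left_hl Lam) (fun x => Cmul c (f x)) (fun x => Cmul c (df x)).
Proof.
  intros HL Hr f df Hf Hdf.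
  apply (Hstar_on_ext _ (E (Cmul c B) r w) (Ed (Cmul c B) r w)).
  - apply left_convex.
  - apply Hstar_E; [apply left_convex|lra|]. intros x Hx; unfold left_hl in Hx; nra.
  - intros x Hx; unfold left_hl in Hx. rewrite E_scale, Hf by lra. auto.
  - intros x Hx; unfold left_hl in Hx. rewrite Ed_scale, Hdf by lra. auto.
Qed.

Lemma Hstar_scaled_right Lam c B r w : 0 < Lam -> r < 0 ->
  forall f df, (forall x, 0 < x -> f x = E B r w x) -> (forall x, 0 < x -> df x = Ed B r w x) ->
  Hstar_on (right_hl Lam) (fun x => Cmul c (f x)) (fun x => Cmul c (df x)).
Proof.
  intros HL Hr f df Hf Hdf.
  apply (Hstar_on_ext _ (E (Cmul c B) r w) (Ed (Cmul c B) r w)).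
  - apply right_convex.
  - apply Hstar_E; [apply right_convex|lra|]. intros x Hx; unfold right_hl in Hx; nra.
  - intros x Hx; unfold right_hl in Hx. rewrite E_scale, Hf by lra. auto.
  - intros x Hx; unfold right_hl in Hx. rewrite Ed_scale, Hdf by lra. auto.
Qed.

Lemma Hstar_F1 Lam th c : 0 < Lam -> forall S, (S = left_hl Lam \/ S = right_hl Lam) ->
  Hstar_on S (fun x => Cmul c (F1 Lam th x)) (fun x => Cmul c (dF1 Lam th x)).
Proof.
  pose proof s_pos. intros HL S [->| ->].
  - apply (Hstar_scaled_left Lam c (B1l Lam) s (- s)); auto.
    + intros; apply F1_left; auto. + intros; apply dF1_left; auto.
  - apply (Hstar_scaled_right Lam c (B1r Lam th) (- s) (- s)); auto; [lra| |].
    + intros; apply F1_right; auto. + intros; apply dF1_right; auto.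
Qed.

Lemma Hstar_F2 Lam th c : 0 < Lam -> forall S, (S = left_hl Lam \/ S = right_hl Lam) ->
  Hstar_on S (fun x => Cmul c (F2 Lam th x)) (fun x => Cmul c (dF2 Lam th x)).
Proof.
  pose proof s_pos. intros HL S [->| ->].
  - apply (Hstar_scaled_left Lam c (B2l Lam th) s s); auto.
    + intros; apply F2_left; auto. + intros; apply dF2_left; auto.
  - apply (Hstar_scaled_right Lam c (B2r Lam) (- s) s); auto; [lra| |].
    + intros; apply F2_right; auto. + intros; apply dF2_right; auto.
Qed.

Definition Cone := RtoC 1.

Lemma Cring : ring_theory C0 Cone Cadd Cmul Csub Copp (@eq Cplx).
Proof.
  constructor; intros; apply Cext; unfold C0, Cone, RtoC, Csub; simpl; ring.
Qed.
Add Ring Cplx_ring : Cring.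

Definition Cinv (z : Cplx) := mkC (Re z / Cnorm2 z) (- Im z / Cnorm2 z).

Lemma Cinv_r z : z <> C0 -> Cmul z (Cinv z) = Cone.
Proof.
  intro Hz. assert (Cnorm2 z <> 0) by (intro H; apply Hz, Cnorm2_eq0; auto).
  destruct z as [a b]. unfold Cinv, Cone, RtoC, Cnorm2 in *; simpl in *.
  apply Cext; simpl; field; auto.
Qed.

Lemma cramer p q u v X Y : Csub (Cmul p v) (Cmul q u) <> C0 ->
  exists cL cR, Cadd (Cmul cL p) (Cmul cR q) = X /\ Cadd (Cmul cL u) (Cmul cR v) = Y.
Proof.
  intro HD. pose proof (Cinv_r _ HD) as HI. generalize dependent (Cinv (Csub (Cmul p v) (Cmul q u))). intros J HI.
  exists (Cmul (Csub (Cmul X v) (Cmul q Y)) J), (Cmul (Csub (Cmul p Y) (Cmul u X)) J).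
  split.
  - transitivity (Cmul X (Cmul (Csub (Cmul p v) (Cmul q u)) J)); [ring|]. rewrite HI; ring.
  - transitivity (Cmul Y (Cmul (Csub (Cmul p v) (Cmul q u)) J)); [ring|]. rewrite HI; ring.
Qed.

Lemma Cexpi_add x y : Cexpi (x + y) = Cmul (Cexpi x) (Cexpi y).
Proof. unfold Cexpi; apply Cext; simpl; [rewrite cos_plus|rewrite sin_plus]; ring. Qed.

Lemma Cexpi_2PI x : Cexpi (x + 2 * PI) = Cexpi x.
Proof. rewrite Cexpi_add. unfold Cexpi at 2. rewrite cos_2PI, sin_2PI. apply Cext; simpl; ring. Qed.

Lemma Copp_Cexpi x : Copp (Cexpi x) = Cexpi (x + PI).
Proof. unfold Cexpi. rewrite neg_cos, neg_sin. reflexivity. Qed.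

Lemma E_val a m r w x : E (Cmul (Cexpi a) (RtoC m)) r w x = Cmul (RtoC (m * exp (r*x))) (Cexpi (a + w*x)).
Proof. rewrite Cexpi_add. unfold E. apply Cext; simpl; ring. Qed.

Lemma Ed_val a m r w mu x : mkC r w = Cexpi mu ->
  Ed (Cmul (Cexpi a) (RtoC m)) r w x = Cmul (RtoC (m * exp (r*x))) (Cexpi (a + mu + w*x)).
Proof. intro H. unfold Ed. rewrite H, !Cexpi_add. unfold E. apply Cext; simpl; ring. Qed.

Lemma s_eq : s = 1 / sqrt 2.
Proof. unfold s, Rdiv; ring. Qed.

Lemma mk1 : mkC s (- s) = Cexpi (- (PI/4)).
Proof. unfold Cexpi. rewrite cos_neg, sin_neg, cos_PI4, sin_PI4, s_eq. reflexivity. Qed.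
Lemma mk2 : mkC (- s) (- s) = Cexpi (PI/4 - PI).
Proof. unfold Cexpi. rewrite cos_minus, sin_minus, cos_PI4, sin_PI4, cos_PI, sin_PI, s_eq. apply Cext; simpl; ring. Qed.
Lemma mk3 : mkC s s = Cexpi (PI/4).
Proof. unfold Cexpi. rewrite cos_PI4, sin_PI4, s_eq. reflexivity. Qed.
Lemma mk4 : mkC (- s) s = Cexpi (- (PI/4) + PI).
Proof. unfold Cexpi. rewrite neg_cos, neg_sin, cos_neg, sin_neg, cos_PI4, sin_PI4, s_eq. apply Cext; simpl; ring. Qed.

Definition kk := Rpower 2 (1/4).
Lemma kk_pos : 0 < kk.
Proof. unfold kk, Rpower. apply exp_pos. Qed.

Lemma mag1 Lam : Nc Lam * exp (s * - Lam) = kk.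
Proof.
  unfold Nc, kk. rewrite Rmult_assoc, <- exp_plus.
  replace (Lam / sqrt 2 + s * - Lam) with 0 by (unfold s, Rdiv; ring). rewrite exp_0; ring.
Qed.
Lemma mag2 Lam : Nc Lam * exp (- s * Lam) = kk.
Proof. replace (- s * Lam) with (s * - Lam) by ring. apply mag1. Qed.

Lemma sq2 Lam : sqrt 2 * Lam = 2 * (s * Lam).
Proof.
  assert (H: sqrt 2 * sqrt 2 = 2) by (apply sqrt_sqrt; lra).
  assert (Hn: sqrt 2 <> 0) by (apply Rgt_not_eq, sqrt_lt_R0; lra).
  assert (sqrt 2 * Lam - 2 * (s * Lam) = (sqrt 2 * sqrt 2 - 2) * Lam / sqrt 2) by (unfold s; field; auto).
  rewrite H in H0. lra.
Qed.

Lemma Cmul_opp_val a m b : Cmul (Copp (Cexpi a)) (Cmul (RtoC m) (Cexpi b)) = Cmul (RtoC m) (Cexpi (a + PI + b)).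
Proof. rewrite Copp_Cexpi, (Cexpi_add (a + PI) b). ring. Qed.
Lemma Cmul_val a m b : Cmul (Cexpi a) (Cmul (RtoC m) (Cexpi b)) = Cmul (RtoC m) (Cexpi (a + b)).
Proof. rewrite (Cexpi_add a b). ring. Qed.

Section Vals.
Variables (Lam th : R).
Hypothesis HL : 0 < Lam.

Lemma vF1m : F1 Lam th (- Lam) = Cmul (RtoC kk) (Cexpi (0 + - s * - Lam)).
Proof. rewrite F1_left by lra. unfold B1l. rewrite E_val, mag1. reflexivity. Qed.
Lemma vdF1m : dF1 Lam th (- Lam) = Cmul (RtoC kk) (Cexpi (0 + - (PI/4) + - s * - Lam)).
Proof. rewrite dF1_left by lra. unfold B1l. rewrite (Ed_val _ _ _ _ _ _ mk1), mag1. reflexivity. Qed.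
Lemma vF1p : F1 Lam th Lam = Cmul (RtoC kk) (Cexpi (ga Lam th + - s * Lam)).
Proof. rewrite F1_right by lra. unfold B1r. rewrite E_val, mag2. reflexivity. Qed.
Lemma vdF1p : dF1 Lam th Lam = Cmul (RtoC kk) (Cexpi (ga Lam th + (PI/4 - PI) + - s * Lam)).
Proof. rewrite dF1_right by lra. unfold B1r. rewrite (Ed_val _ _ _ _ _ _ mk2), mag2. reflexivity. Qed.
Lemma vF2m : F2 Lam th (- Lam) = Cmul (RtoC kk) (Cexpi (gb Lam th + s * - Lam)).
Proof. rewrite F2_left by lra. unfold B2l. rewrite E_val, mag1. reflexivity. Qed.
Lemma vdF2m : dF2 Lam th (- Lam) = Cmul (RtoC kk) (Cexpi (gb Lam th + PI/4 + s * - Lam)).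
Proof. rewrite dF2_left by lra. unfold B2l. rewrite (Ed_val _ _ _ _ _ _ mk3), mag1. reflexivity. Qed.
Lemma vF2p : F2 Lam th Lam = Cmul (RtoC kk) (Cexpi (0 + s * Lam)).
Proof. rewrite F2_right by lra. unfold B2r. rewrite E_val, mag2. reflexivity. Qed.
Lemma vdF2p : dF2 Lam th Lam = Cmul (RtoC kk) (Cexpi (0 + (- (PI/4) + PI) + s * Lam)).
Proof. rewrite dF2_right by lra. unfold B2r. rewrite (Ed_val _ _ _ _ _ _ mk4), mag2. reflexivity. Qed.

Lemma I1 : F1 Lam th Lam = Cmul (Copp (Cexpi th)) (dF1 Lam th (- Lam)).
Proof.
  rewrite vF1p, vdF1m, Cmul_opp_val. do 2 f_equal. unfold ga. pose proof (sq2 Lam). lra.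
Qed.
Lemma I2 : dF1 Lam th Lam = Cmul (Cexpi th) (F1 Lam th (- Lam)).
Proof.
  rewrite vdF1p, vF1m, Cmul_val. do 2 f_equal. unfold ga. pose proof (sq2 Lam). lra.
Qed.
Lemma I3 : F2 Lam th Lam = Cmul (Copp (Cexpi th)) (dF2 Lam th (- Lam)).
Proof.
  rewrite vF2p, vdF2m, Cmul_opp_val. rewrite <- (Cexpi_2PI (0 + s * Lam)). do 2 f_equal. unfold gb. pose proof (sq2 Lam). lra.
Qed.
Lemma I4 : dF2 Lam th Lam = Cmul (Cexpi th) (F2 Lam th (- Lam)).
Proof.
  rewrite vdF2p, vF2m, Cmul_val. do 2 f_equal. unfold gb. pose proof (sq2 Lam). lra.
Qed.

Lemma Cnorm2_val m x : Cnorm2 (Cmul (RtoC m) (Cexpi x)) = m * m.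
Proof. unfold Cnorm2, Cexpi; simpl. pose proof (sin2_cos2 x). unfold Rsqr in H. nra. Qed.

Lemma dF1m_nz : dF1 Lam th (- Lam) <> C0.
Proof.
  rewrite vdF1m. intro H. pose proof (Cnorm2_val kk (0 + - (PI / 4) + - s * - Lam)). rewrite H in H0.
  unfold Cnorm2 in H0; simpl in H0. pose proof kk_pos. nra.
Qed.
Lemma F1m_nz : F1 Lam th (- Lam) <> C0.
Proof.
  rewrite vF1m. intro H. pose proof (Cnorm2_val kk (0 + - s * - Lam)). rewrite H in H0.
  unfold Cnorm2 in H0; simpl in H0. pose proof kk_pos. nra.
Qed.

Lemma Delta_nz : Csub (Cmul (F1 Lam th (- Lam)) (dF2 Lam th (- Lam))) (Cmul (F2 Lam th (- Lam)) (dF1 Lam th (- Lam))) <> C0.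
Proof.
  rewrite vF1m, vdF2m, vF2m, vdF1m. set (phi := gb Lam th - PI/4).
  assert (E1: Cmul (Cmul (RtoC kk) (Cexpi (0 + - s * - Lam))) (Cmul (RtoC kk) (Cexpi (gb Lam th + PI / 4 + s * - Lam)))
     = Cmul (RtoC (kk*kk)) (Cexpi (phi + PI/2))).
  { replace (phi + PI/2) with ((0 + - s * - Lam) + (gb Lam th + PI / 4 + s * - Lam)) by (unfold phi; lra).
    rewrite (Cexpi_add (0 + - s * - Lam) (gb Lam th + PI / 4 + s * - Lam)). replace (RtoC (kk*kk)) with (Cmul (RtoC kk) (RtoC kk)) by (apply Cext; simpl; ring). ring. }
  assert (E2: Cmul (Cmul (RtoC kk) (Cexpi (gb Lam th + s * - Lam))) (Cmul (RtoC kk) (Cexpi (0 + - (PI / 4) + - s * - Lam)))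
     = Cmul (RtoC (kk*kk)) (Cexpi phi)).
  { replace phi with ((gb Lam th + s * - Lam) + (0 + - (PI / 4) + - s * - Lam)) by (unfold phi; lra).
    rewrite (Cexpi_add (gb Lam th + s * - Lam) (0 + - (PI / 4) + - s * - Lam)). replace (RtoC (kk*kk)) with (Cmul (RtoC kk) (RtoC kk)) by (apply Cext; simpl; ring). ring. }
  rewrite E1, E2. intro H.
  assert (Cnorm2 (Csub (Cmul (RtoC (kk * kk)) (Cexpi (phi + PI / 2))) (Cmul (RtoC (kk * kk)) (Cexpi phi))) = 0)
    by (rewrite H; unfold Cnorm2; simpl; ring).
  unfold Cnorm2, Cexpi in H0; simpl in H0. rewrite cos_plus, sin_plus, cos_PI2, sin_PI2 in H0.
  pose proof (sin2_cos2 phi). unfold Rsqr in H1. pose proof kk_pos.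
  assert (0 < kk * kk) by nra. set (m := kk * kk) in *.
  assert (m * m * 2 = 0).
  { rewrite <- H0. transitivity (m * m * 2 * (sin phi * sin phi + cos phi * cos phi)); [rewrite H1; ring|ring]. }
  nra.
Qed.
End Vals.

Lemma sides Lam S : S = left_hl Lam \/ S = right_hl Lam -> convex S.
Proof. intros [-> | ->]; [apply left_convex|apply right_convex]. Qed.

Lemma Hstar_combo Lam th f df c1 c2 : 0 < Lam -> Hstar_with Lam f df ->
  Hstar_with Lam (fun x => Cadd (f x) (Cadd (Cmul c1 (F1 Lam th x)) (Cmul c2 (F2 Lam th x))))
                 (fun x => Cadd (df x) (Cadd (Cmul c1 (dF1 Lam th x)) (Cmul c2 (dF2 Lam th x)))).
Proof.
  intros HL [Hl Hr].
  assert (G: forall S, (S = left_hl Lam \/ S = right_hl Lam) -> Hstar_on S f df ->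
     Hstar_on S (Fadd f (Fadd (fun x => Cmul c1 (F1 Lam th x)) (fun x => Cmul c2 (F2 Lam th x))))
                (Fadd df (Fadd (fun x => Cmul c1 (dF1 Lam th x)) (fun x => Cmul c2 (dF2 Lam th x))))).
  { intros S HS H. pose proof (sides Lam S HS) as Hc.
    apply Hstar_on_add; auto. apply Hstar_on_add; auto.
    - apply Hstar_F1; auto.
    - apply Hstar_F2; auto. }
  split; [exact (G _ (or_introl eq_refl) Hl) | exact (G _ (or_intror eq_refl) Hr)].
Qed.

Lemma Hstar_zero Lam : 0 < Lam -> Hstar_with Lam (fun _ => C0) (fun _ => C0).
Proof.
  intros HL.
  assert (G: forall S, (S = left_hl Lam \/ S = right_hl Lam) -> Hstar_on S (fun _ => C0) (fun _ => C0)).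
  { intros S HS. apply (Hstar_on_ext S (fun x => Cmul C0 (F1 Lam 0 x)) (fun x => Cmul C0 (dF1 Lam 0 x))).
    - apply (sides Lam); auto.
    - apply Hstar_F1; auto.
    - intros; ring.
    - intros; ring. }
  split; apply G; auto.
Qed.

Lemma Hstar_F1_plain Lam th : 0 < Lam -> Hstar_with Lam (F1 Lam th) (dF1 Lam th).
Proof.
  intros HL.
  assert (G: forall S, (S = left_hl Lam \/ S = right_hl Lam) -> Hstar_on S (F1 Lam th) (dF1 Lam th)).
  { intros S HS. apply (Hstar_on_ext S (fun x => Cmul Cone (F1 Lam th x)) (fun x => Cmul Cone (dF1 Lam th x))).
    - apply (sides Lam); auto.
    - apply Hstar_F1; auto.
    - intros; ring.
    - intros; ring. }
  split; apply G; auto.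
Qed.

Lemma Ccancel a b d : Cmul a d = Cmul b d -> d <> C0 -> a = b.
Proof.
  intros H Hd. assert (Cmul (Csub a b) d = C0) by (transitivity (Csub (Cmul a d) (Cmul b d)); [ring|rewrite H; ring]).
  pose proof (Cmul_cancel _ _ H0 Hd). transitivity (Cadd (Csub a b) b); [ring|rewrite H1; ring].
Qed.

Theorem theorem2 (Lam theta : R) (a2 a3 : Cplx) :
  0 < Lam -> 0 <= theta < 2 * PI ->
  ((forall psi : R -> Cplx, in_Dgamma Lam theta psi <-> in_Dalpha Lam a2 a3 psi) <->
   (a2 = Copp (Cexpi theta) /\ a3 = Cexpi theta)).
Proof.
  intros HL _. split.
  - intro Heq.
    assert (Hg: in_Dgamma Lam theta (F1 Lam theta)).
    { exists (fun _ => C0), Cone, C0. split.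
      - exists (fun _ => C0). split; [apply (Hstar_zero Lam HL)|]. repeat split.
      - intros x _. unfold F1. ring. }
    apply Heq in Hg. destruct Hg as [dpsi [[Hl Hr] [Hb1 Hb2]]].
    destruct (Hstar_F1_plain Lam theta HL) as [Pl Pr].
    assert (U1: dpsi (- Lam) = dF1 Lam theta (- Lam)).
    { apply (deriv_unique (left_hl Lam) (F1 Lam theta)); [apply Hl|apply Pl|unfold left_hl; lra|].
      intros d Hd. exists (- Lam - d / 2). unfold left_hl. split; [lra|split; [lra|]].
      rewrite Rabs_left by lra. lra. }
    assert (U2: dpsi Lam = dF1 Lam theta Lam).
    { apply (deriv_unique (right_hl Lam) (F1 Lam theta)); [apply Hr|apply Pr|unfold right_hl; lra|].
      intros d Hd. exists (Lam + d / 2). unfold right_hl. split; [lra|split; [lra|]].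
      rewrite Rabs_right by lra. lra. }
    rewrite U1, (I1 Lam theta HL) in Hb1. rewrite U2, (I2 Lam theta HL) in Hb2.
    split.
    + symmetry. apply (Ccancel _ _ (dF1 Lam theta (- Lam))); [exact Hb1|apply dF1m_nz; auto].
    + symmetry. apply (Ccancel _ _ (F1 Lam theta (- Lam))); [exact Hb2|apply F1m_nz; auto].
  - intros [-> ->] psi. split.
    + intros [psi0 [cL [cR [[dpsi0 [HH [z1 [z2 [z3 z4]]]]] Heq]]]].
      assert (Heq': forall x, Lam <= Rabs x ->
        psi x = Cadd (psi0 x) (Cadd (Cmul cL (F1 Lam theta x)) (Cmul cR (F2 Lam theta x)))) by exact Heq.
      exists (fun x => Cadd (dpsi0 x) (Cadd (Cmul cL (dF1 Lam theta x)) (Cmul cR (dF2 Lam theta x)))).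
      destruct (Hstar_combo Lam theta psi0 dpsi0 cL cR HL HH) as [Cl Cr].
      split; [split|split].
      * apply (Hstar_on_ext _ _ _ _ _ (left_convex Lam) Cl); [|intros; reflexivity].
        intros x Hx; unfold left_hl in Hx. symmetry; apply Heq'. rewrite Rabs_left by lra. lra.
      * apply (Hstar_on_ext _ _ _ _ _ (right_convex Lam) Cr); [|intros; reflexivity].
        intros x Hx; unfold right_hl in Hx. symmetry; apply Heq'. rewrite Rabs_right by lra. lra.
      * rewrite Heq' by (rewrite Rabs_right; lra). simpl. rewrite z1, z4, (I1 Lam theta HL), (I3 Lam theta HL). ring.
      * rewrite Heq' by (rewrite Rabs_left; lra). simpl. rewrite z2, z3, (I2 Lam theta HL), (I4 Lam theta HL). ring.
    + intros [dpsi [HH [Hb1 Hb2]]].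
      destruct (cramer (F1 Lam theta (- Lam)) (F2 Lam theta (- Lam)) (dF1 Lam theta (- Lam)) (dF2 Lam theta (- Lam))
                  (psi (- Lam)) (dpsi (- Lam)) (Delta_nz Lam theta HL)) as [cL [cR [Hc1 Hc2]]].
      exists (fun x => Cadd (psi x) (Cadd (Cmul (Copp cL) (F1 Lam theta x)) (Cmul (Copp cR) (F2 Lam theta x)))), cL, cR.
      split.
      * exists (fun x => Cadd (dpsi x) (Cadd (Cmul (Copp cL) (dF1 Lam theta x)) (Cmul (Copp cR) (dF2 Lam theta x)))).
        split; [apply Hstar_combo; auto|].
        repeat split.
        -- rewrite Hb1, (I1 Lam theta HL), (I3 Lam theta HL), <- Hc2. ring.
        -- rewrite <- Hc1. ring.
        -- rewrite Hb2, (I2 Lam theta HL), (I4 Lam theta HL), <- Hc1. ring.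
        -- rewrite <- Hc2. ring.
      * intros x _. change (psi x = Cadd (Cadd (psi x) (Cadd (Cmul (Copp cL) (F1 Lam theta x)) (Cmul (Copp cR) (F2 Lam theta x))))
             (Cadd (Cmul cL (F1 Lam theta x)) (Cmul cR (F2 Lam theta x)))). ring.
Qed.
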